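(* Let $n\ge3$ and let $F(x,y)=a_0\prod_{i=1}^n(x-\alpha_iy)\in\mathbb{Z}[x,y]$ be a binary form of degree $n$ in the class $C(4s-2)$, with discriminant $D$ and Mahler measure $M$, and put $L_i(x,y)=x-\alpha_iy$. Let $h$ be a positive integer with $h<\frac{|D|^{1/(4(n-1))}}{10^n n^{n/(4(n-1))}}$ and put $Q=M/h$. Let $0\le\mathfrak{a}\le\mathfrak{b}$ with $\mathfrak{b}\le h$ and $\mathfrak{b}\le h^{1/2}\mathfrak{a}$, and suppose $F$ is reduced with respect to $(\mathfrak{a},\mathfrak{b})$. Suppose $(x_0,y_0)$ and $(x,y)$ are linearly independent primitive integer points with $\mathfrak{a}\le|F(x_0,y_0)|\le\mathfrak{b}$ and $\mathfrak{a}\le|F(x,y)|\le\mathfrak{b}$. Then there are numbers $\psi_1,\dots,\psi_n$ with $\psi_i=0$ or $\frac{1}{2n}\le\psi_i\le1$ for each $i$, and $\sum_{i=1}^n\psi_i\ge\frac12$, such that for every $i\in\{1,\dots,n\}$ $$\left|\frac{L_i(x_0,y_0)}{L_i(x,y)}\right|\ge\left(Q^{\psi_i}-\frac32-h^{1/(2n)}\right)|x_0y-xy_0|.$$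
   Context: $\alpha_1,\dots,\alpha_n$ are the roots of $F(x,1)$ and $a_0=F(1,0)$. $C(t)$ is the set of binary forms of degree $n$ with integer coefficients, irreducible over $\mathbb{Q}$, such that for all real $(u,v)\neq(0,0)$ the form $uF_x+vF_y$ has at most $t$ real zeros. For $F=c\prod(x-\gamma_iy)$, $M(F)=|c|\prod_i\max(1,|\gamma_i|)$ and $D=c^{2(n-1)}\prod_{i<j}(\gamma_i-\gamma_j)^2$. Forms $F,G$ are equivalent if $G=\pm F(ax+by,cx+dy)$ with $\begin{pmatrix}a&b\\c&d\end{pmatrix}\in GL_2(\mathbb{Z})$. $F$ is normalized with respect to $(\mathfrak{a},\mathfrak{b})$ if $\mathfrak{a}\le|F(1,0)|\le\mathfrak{b}$, and reduced if it is normalized and has smallest Mahler measure among normalized forms equivalent to it. Primitive means $\gcd(x,y)=1$. *)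

(* Defs.v *)
From HB Require Import structures.
From mathcomp Require Import all_boot all_order all_algebra.
From mathcomp Require Import complex.
From mathcomp Require Import reals exp.

Set Implicit Arguments.
Unset Strict Implicit.
Unset Printing Implicit Defensive.

Import Order.TTheory GRing.Theory Num.Theory.
Local Open Scope ring_scope.

(* A binary form of degree n with integer coefficients is represented by the
   polynomial p : {poly int} with
       F(x,y) = \sum_(k <= n) p`_k x^k y^(n-k),
   i.e. p = F(x,1); a0 = F(1,0) = p`_n. *)

Definition feval (T : comPzRingType) (n : nat) (p : {poly int}) (x y : T) : T :=
  \sum_(k < n.+1) (p`_k)%:~R * x ^+ k * y ^+ (n - k).

Definition fevalx (T : comPzRingType) (n : nat) (p : {poly int}) (x y : T) : T :=
  \sum_(k < n.+1) (p`_k *+ k)%:~R * x ^+ k.-1 * y ^+ (n - k).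

Definition fevaly (T : comPzRingType) (n : nat) (p : {poly int}) (x y : T) : T :=
  \sum_(k < n.+1) (p`_k *+ (n - k))%:~R * x ^+ k * y ^+ (n - k).-1.

(* F is a binary form of degree n irreducible over Q.  (If F(1,0) = 0 then
   y divides F, so irreducibility forces size p = n+1, and then F is
   irreducible iff F(x,1) is irreducible in Q[x].) *)
Definition form_irreducible (n : nat) (p : {poly int}) : Prop :=
  size p = n.+1 /\ irreducible_poly (map_poly (intr : int -> rat) p).

(* the class C(t): irreducible forms such that for all real (u,v) <> (0,0),
   u F_x + v F_y has at most t real (projective, distinct) zeros *)
Definition in_classC (R : realType) (n : nat) (p : {poly int}) (t : nat) : Prop :=
  form_irreducible n p /\
  forall u v : R, (u, v) != (0, 0) ->
  forall zs : seq (R * R),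
    (forall z, z \in zs ->
       z != (0, 0) /\ u * fevalx n p z.1 z.2 + v * fevaly n p z.1 z.2 = 0) ->
    pairwise (fun z w : R * R => z.1 * w.2 - z.2 * w.1 != 0) zs ->
    (size zs <= t)%N.

Definition cnorm (R : rcfType) (z : R[i]) : R := complex.Re `|z|.

Definition rootsC (R : rcfType) (q : {poly R[i]}) : seq R[i] :=
  sval (closed_field_poly_normal q).

Definition mahler (R : rcfType) (p : {poly int}) : R :=
  (`|lead_coef p|)%:~R *
  \prod_(z <- rootsC (map_poly (intr : int -> R[i]) p)) Num.max 1 (cnorm z).

Definition equiv_form (n : nat) (p q : {poly int}) : Prop :=
  (size q <= n.+1)%N /\
  exists a b c d e : int,
    (a * d - b * c = 1 \/ a * d - b * c = -1) /\ (e = 1 \/ e = -1) /\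
    forall x y : int,
      feval n q x y = e * feval n p (a * x + b * y) (c * x + d * y).

Definition normalized (R : realType) (n : nat) (p : {poly int}) (a b : R) : Prop :=
  a <= (`|p`_n|)%:~R <= b.

Definition reduced (R : realType) (n : nat) (p : {poly int}) (a b : R) : Prop :=
  normalized n p a b /\
  forall q, equiv_form n p q -> normalized n q a b -> mahler R p <= mahler R q.

Definition discr (R : rcfType) (n : nat) (p : {poly int}) (alpha : 'I_n -> R[i]) : R[i] :=
  (p`_n)%:~R ^+ (2 * (n - 1)) *
  \prod_(i < n) \prod_(j < n | (i < j)%N) (alpha i - alpha j) ^+ 2.

Definition Lform (R : rcfType) (n : nat) (alpha : 'I_n -> R[i]) (i : 'I_n) (x y : int) : R[i] :=
  x%:~R - alpha i * y%:~R.

(* Main.v *)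
Require Import Defs.
From HB Require Import structures.
From mathcomp Require Import all_boot all_order all_algebra.
From mathcomp Require Import complex.
From mathcomp Require Import reals exp.
From mathcomp Require Import ring lra.
Import Order.TTheory GRing.Theory Num.Theory.
Local Open Scope ring_scope.

Lemma feval_intr (K : numFieldType) n p (x y : int) :
  ((feval n p x y)%:~R : K) = feval n p (x%:~R) (y%:~R).
Proof.
rewrite /feval rmorph_sum; apply: eq_bigr => k _ /=.
by rewrite !rmorphM !rmorphXn /= intz.
Qed.

Lemma prod_seqE (K : nzRingType) n (g : 'I_n -> K) :
  \prod_(i < n) ('X - (g i)%:P) = \prod_(x <- [seq g i | i <- index_enum 'I_n]) ('X - x%:P).
Proof. by rewrite big_map. Qed.

Lemma size_prodX (K : nzRingType) n (g : 'I_n -> K) :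
  size (\prod_(i < n) ('X - (g i)%:P)) = n.+1.
Proof. by rewrite size_prod_XsubC -[in RHS](card_ord n) cardT enumT /index_enum unlock. Qed.

Lemma feval_prod (K : numFieldType) n (r : {poly int}) (c : K) (g : 'I_n -> K) :
  map_poly intr r = c *: \prod_(i < n) ('X - (g i)%:P) ->
  forall z w, feval n r z w = c * \prod_i (z - g i * w).
Proof.
move=> E z w.
have sz : (size r <= n.+1)%N.
  rewrite -(size_map_inj_poly (@intr_inj K) (rmorph0 _)) E.
  by apply: leq_trans (size_scale_leq _ _) _; rewrite size_prodX.
have coefn : (r`_n)%:~R = c.
  rewrite -coef_map_id0 // E coefZ.
  have := monic_prod_XsubC (index_enum 'I_n) predT g.
  by rewrite monicE /lead_coef size_prodX => /eqP ->; rewrite mulr1.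
have [->|w0] := eqVneq w 0.
  rewrite /feval big_ord_recr /= subnn expr0 mulr1 big1 ?add0r.
    by rewrite coefn; congr (_ * _); rewrite (eq_bigr (fun=> z)) ?prodr_const ?card_ord // => i _; rewrite mulr0 subr0.
  move=> [k hk] _ /=; rewrite expr0n subn_eq0 leqNgt hk /= mulr0 //.
have H1 : (map_poly intr r).[z / w] = \sum_(k < n.+1) (r`_k)%:~R * (z / w) ^+ k.
  rewrite (@horner_coef_wide _ n.+1); last by rewrite (size_map_inj_poly (@intr_inj K)).
  by apply: eq_bigr => k _; rewrite coef_map_id0.
have H2 : feval n r z w = w ^+ n * (map_poly intr r).[z / w].
  rewrite H1 mulr_sumr /feval; apply: eq_bigr => -[k hk] _ /=.
  have -> : (w ^+ n = w ^+ k * w ^+ (n - k)) by rewrite -exprD subnKC // -ltnS.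
  rewrite exprMn exprVn; field; by rewrite expf_neq0.
rewrite H2 E hornerZ horner_prod.
rewrite mulrCA; congr (_ * _).
rewrite -[in X in X * _](card_ord n) -prodrMl; apply: eq_bigr => i _.
by rewrite !hornerE; field.
Qed.
Arguments feval_prod {K n r c g}.

Lemma poly_eq_horner (K : numFieldType) (p q : {poly K}) :
  (forall z, p.[z] = q.[z]) -> p = q.
Proof.
move=> E; apply/eqP; rewrite -subr_eq0; apply/negPn/negP => nz.
pose rs : seq K := [seq i%:R | i <- iota 0 (size (p - q))].
have H1 : all (root (p - q)) rs.
  by apply/allP => x /mapP [i _ ->]; rewrite /root hornerD hornerN E subrr.
have H2 : uniq rs.
  by rewrite map_inj_uniq ?iota_uniq // => i j /eqP; rewrite eqr_nat => /eqP.
by have := max_poly_roots nz H1 H2; rewrite size_map size_iota ltnn.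
Qed.

Definition qform n (p : {poly int}) (a b c d : int) : {poly int} :=
  \sum_(k < n.+1) p`_k *: ((a%:P * 'X + b%:P) ^+ k * (c%:P * 'X + d%:P) ^+ (n - k)).

Lemma qform_horner (K : numFieldType) n p a b c d (t : K) :
  (map_poly intr (qform n p a b c d)).[t] =
  feval n p (a%:~R * t + b%:~R) (c%:~R * t + d%:~R).
Proof.
rewrite /qform rmorph_sum horner_sum /feval; apply: eq_bigr => k _.
rewrite -mul_polyC !rmorphM !rmorphXn !rmorphD !rmorphM /= !map_polyC map_polyX /=.
by rewrite !hornerE.
Qed.

Lemma monic_coefn (K : nzRingType) n (g : 'I_n -> K) :
  (\prod_(i < n) ('X - (g i)%:P))`_n = 1.
Proof.
have := monic_prod_XsubC (index_enum 'I_n) predT g.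
by rewrite monicE /lead_coef size_prodX => /eqP.
Qed.

Lemma lead_prodX (K : nzRingType) n (g : 'I_n -> K) :
  lead_coef (\prod_(i < n) ('X - (g i)%:P)) = 1.
Proof. by rewrite /lead_coef size_prodX monic_coefn. Qed.

Lemma qform_props (R : realType) n p (alpha : 'I_n -> R[i]) (a b c d : int) :
  map_poly (intr : int -> R[i]) p = (p`_n)%:~R *: \prod_(i < n) ('X - (alpha i)%:P) ->
  feval n p a c != 0 ->
  [/\ (size (qform n p a b c d) <= n.+1)%N,
      forall X Y : int, feval n (qform n p a b c d) X Y = feval n p (a * X + b * Y) (c * X + d * Y),
      (qform n p a b c d)`_n = feval n p a c &
      mahler R (qform n p a b c d) = (`|feval n p a c|)%:~R *
         \prod_(i < n) Num.max 1 (cnorm (- Lform alpha i b d / Lform alpha i a c))].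
Proof.
move=> E F0; set q := qform n p a b c d.
pose L i := Lform alpha i a c.
pose beta i := - Lform alpha i b d / L i.
pose C : R[i] := (p`_n)%:~R * \prod_i L i.
have Fac : (feval n p a c)%:~R = C by rewrite feval_intr (feval_prod E).
have C0 : C != 0 by rewrite -Fac intr_eq0.
have L0 i : L i != 0.
  by move: C0; rewrite mulf_eq0 negb_or => /andP [_ /prodf_neq0]; apply.
have mapq : map_poly (intr : int -> R[i]) q = C *: \prod_(i < n) ('X - (beta i)%:P).
  apply: poly_eq_horner => t; rewrite qform_horner (feval_prod E) hornerZ horner_prod.
  rewrite /C -mulrA -big_split /=; congr (_ * _); apply: eq_bigr => i _.
  have := L0 i; rewrite /beta /L /Lform !hornerE => Li; field.
  by [].
have szq : (size q <= n.+1)%N.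
  rewrite -(size_map_inj_poly (@intr_inj R[i]) (rmorph0 _)) mapq.
  by apply: leq_trans (size_scale_leq _ _) _; rewrite size_prodX.
split => //.
- move=> X Y; apply: (@intr_inj R[i]).
  rewrite !feval_intr (feval_prod mapq) (feval_prod E) !rmorphD !rmorphM /=.
  rewrite /C -mulrA -big_split /=; congr (_ * _); apply: eq_bigr => i _.
  have := L0 i; rewrite /beta /L /Lform => Li; field.
  by [].
- apply: (@intr_inj R[i]); rewrite -coef_map_id0 // mapq coefZ monic_coefn mulr1 //.
- rewrite /mahler.
  have lq : lead_coef q = feval n p a c.
    apply: (@intr_inj R[i]); rewrite -(lead_coef_map_inj (@intr_inj R[i])) //.
    by rewrite mapq lead_coefZ lead_prodX mulr1.
  rewrite lq; congr (_ * _).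
  rewrite /rootsC; case: closed_field_poly_normal => rs /= Ers.
  have : perm_eq [seq beta i | i <- index_enum 'I_n] rs.
    apply: prod_XsubC_eq; rewrite -prod_seqE; apply: (scalerI C0).
    by rewrite -mapq {1}Ers (lead_coef_map_inj (@intr_inj R[i])) // lq Fac.
  move=> hp; rewrite -(perm_big _ hp) big_map //.
Qed.

Section CN.
Local Open Scope complex_scope.
Variable R : rcfType.

Lemma cnormE (z : R[i]) : (cnorm z)%:C = `|z|.
Proof. by rewrite /cnorm normc_def. Qed.

Lemma cnormR (r : R) : cnorm (r%:C) = `|r|.
Proof. by rewrite /cnorm normc_def /= expr0n addr0 sqrtr_sqr. Qed.

Lemma cnorm_ge0 (z : R[i]) : 0 <= cnorm z.
Proof. by have := normr_ge0 z; rewrite -cnormE -(rmorph0 (real_complex R)) lecR. Qed.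

Lemma cnormM (z w : R[i]) : cnorm (z * w) = cnorm z * cnorm w.
Proof. by apply: complexI; rewrite rmorphM !cnormE normrM. Qed.

Lemma cnormD (z w : R[i]) : cnorm (z + w) <= cnorm z + cnorm w.
Proof. by rewrite -lecR rmorphD !cnormE ler_normD. Qed.

Lemma cnormN (z : R[i]) : cnorm (- z) = cnorm z.
Proof. by apply: complexI; rewrite !cnormE normrN. Qed.

Lemma cnorm_int (z : int) : cnorm (z%:~R : R[i]) = (`|z|)%:~R.
Proof. by rewrite -(rmorph_int (real_complex R)) cnormR intr_norm. Qed.

Lemma real_complex_int (z : int) : ((z%:~R : R)%:C) = z%:~R.
Proof. by rewrite rmorph_int. Qed.
End CN.

Lemma ln_prod (R : realType) n (m : 'I_n -> R) : (forall i, 0 < m i) ->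
  ln (\prod_i m i) = \sum_i ln (m i).
Proof.
move=> mpos.
suff : 0 < \prod_i m i /\ ln (\prod_i m i) = \sum_i ln (m i) by case.
apply: (big_rec2 (fun a b => 0 < a /\ ln a = b)); first by rewrite ln1 ltr01.
move=> i a b _ [apos <-]; split; first by rewrite mulr_gt0.
by rewrite lnM // posrE.
Qed.

Lemma psi_exists (R : realType) n (Q : R) (m : 'I_n -> R) : (0 < n)%N -> 1 < Q ->
  (forall i, 1 <= m i) -> Q <= \prod_i m i ->
  exists psi : 'I_n -> R,
    [/\ forall i, psi i = 0 \/ (1 / (2 * n%:R) <= psi i <= 1),
        1 / 2 <= \sum_(i < n) psi i & forall i, Q `^ psi i <= m i].
Proof.
move=> n0 Q1 m1 Qm.
have mpos i : 0 < m i by apply: lt_le_trans (m1 i).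
have lnQ : 0 < ln Q by apply: ln_gt0.
pose l i := ln (m i) / ln Q.
have l0 i : 0 <= l i by rewrite /l divr_ge0 // ?ln_ge0 // ltW.
have suml : 1 <= \sum_i l i.
  rewrite /l -mulr_suml -ln_prod // ler_pdivlMr // mul1r ler_ln ?posrE //.
    by apply: lt_trans Q1.
  by apply: lt_le_trans Qm; apply: lt_trans Q1.
set eps := 1 / (2 * n%:R).
have eps0 : 0 < eps by rewrite /eps divr_gt0 // mulr_gt0 // ltr0n.
have eps1 : eps <= 1.
  rewrite /eps ler_pdivrMr ?mulr_gt0 ?ltr0n // mul1r.
  have : (1 <= n%:R :> R) by rewrite ler1n.
  lra.
pose psi i := if l i < eps then 0 else Num.min (l i) 1.
exists psi; split.
- move=> i; rewrite /psi; case: ifP => lt; [by left|right].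
  apply/andP; split; last by rewrite ge_min lexx orbT.
  by rewrite le_min eps1 andbT leNgt lt.
- have h1 i : Num.min (l i) 1 - eps <= psi i.
    rewrite /psi; case: ifP => lt; last by lra.
    have : Num.min (l i) 1 <= l i by rewrite ge_min lexx.
    lra.
  have h2 : 1 <= \sum_i Num.min (l i) 1.
    case: (pickP (fun i => 1 <= l i)) => [j lj|none].
      rewrite (bigD1 j) //= (min_r lj) lerDl sumr_ge0 // => i _.
      by rewrite le_min l0 ler01.
    apply: le_trans suml _; apply: ler_sum => i _.
    have : ~~ (1 <= l i) by rewrite none.
    by rewrite -ltNge => lt; rewrite min_l // ltW.
  have h3 : \sum_(i < n) (Num.min (l i) 1 - eps) = \sum_i Num.min (l i) 1 - 1/2.
    rewrite sumrB sumr_const card_ord /eps; congr (_ - _).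
    rewrite -[_ *+ n]mulr_natr; field.
    by rewrite pnatr_eq0 -lt0n.
  apply: le_trans (ler_sum _ (fun i _ => h1 i)); rewrite h3; lra.
- move=> i; rewrite /psi; case: ifP => _; first by rewrite powRr0.
  apply: (@le_trans _ _ (Q `^ l i)).
    by apply: ler_powR; [exact: ltW|rewrite ge_min lexx].
  rewrite /powR ifF; last by apply/negbTE; rewrite gt_eqF // (lt_trans ltr01).
  by rewrite /l mulfVK ?gt_eqF // lnK ?posrE.
Qed.

Lemma ratio_alg (K : fieldType) (al X Y xx yy b d : K) :
  Y != 0 -> xx - al * yy != 0 ->
  ((X * xx + Y * b) - al * (X * yy + Y * d)) / (xx - al * yy) =
  Y * (X / Y - (- (b - al * d)) / (xx - al * yy)).
Proof. by move=> Y0 L0; field; rewrite L0 Y0. Qed.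

Lemma betak_alg (K : fieldType) (al xx yy b d k : K) :
  xx - al * yy != 0 ->
  (- ((b + k * xx) - al * (d + k * yy))) / (xx - al * yy) = (- (b - al * d)) / (xx - al * yy) - k.
Proof. by move=> L0; field. Qed.

Lemma mahler_ge0 (R : rcfType) (p : {poly int}) : 0 <= mahler R p.
Proof.
rewrite /mahler mulr_ge0 // ?ler0z // prodr_ge0 // => z _.
by rewrite le_max ler01.
Qed.

Theorem lemma7p2 (R : realType) (n s h : nat) (p : {poly int})
  (alpha : 'I_n -> R[i]) (a b : R) (x0 y0 x y : int) :
  (3 <= n)%N -> (0 < s)%N ->
  in_classC R n p (4 * s - 2) ->
  map_poly (intr : int -> R[i]) p = (p`_n)%:~R *: \prod_(i < n) ('X - (alpha i)%:P) ->
  (0 < h)%N ->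
  h%:R < cnorm (discr p alpha) `^ (1 / (4 * (n%:R - 1)))
           / (10 ^+ n * n%:R `^ (n%:R / (4 * (n%:R - 1)))) ->
  0 <= a -> a <= b -> b <= h%:R -> b <= Num.sqrt (h%:R) * a ->
  reduced n p a b ->
  gcdz x0 y0 = 1 -> gcdz x y = 1 -> x0 * y - x * y0 != 0 ->
  a <= (`|feval n p x0 y0|)%:~R <= b ->
  a <= (`|feval n p x y|)%:~R <= b ->
  exists psi : 'I_n -> R,
    [/\ forall i, psi i = 0 \/ (1 / (2 * n%:R) <= psi i <= 1),
        1 / 2 <= \sum_(i < n) psi i &
        forall i,
          ((mahler R p / h%:R) `^ (psi i) - 3 / 2 - h%:R `^ (1 / (2 * n%:R)))
            * (`|x0 * y - x * y0|)%:~R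
          <= cnorm (Lform alpha i x0 y0 / Lform alpha i x y)].
Proof.
move=> n3 s0 [[szp irr] _] E h0 hD a0 ab bh bsa [normp redp] g0 g1 Dneq
  /andP [a_F0 F0_b] /andP [a_F F_b].
have pn0 : p`_n != 0.
  have : lead_coef p != 0 by rewrite lead_coef_eq0 -size_poly_eq0 szp.
  by rewrite /lead_coef szp.
have apos : 0 < a.
  rewrite lt_neqAle a0 andbT; apply/negP => /eqP a00.
  move: bsa; rewrite -a00 mulr0 => b0.
  move: normp => /andP [_]; move/le_trans => /(_ _ b0).
  by rewrite intr_norm normr_le0 intr_eq0 (negbTE pn0).
have hpos : 0 < h%:R :> R by rewrite ltr0n.
have Fxy0 : feval n p x y != 0.
  apply/eqP => F0; move: a_F; rewrite F0 normr0 => a00.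
  by move: apos; rewrite ltNge a00.
set Q := mahler R p / h%:R.
have hp0 : 0 <= h%:R `^ (1 / (2 * n%:R)) :> R by apply: powR_ge0.
have [Q1|Q1] := leP Q 1.
  exists (fun _ => 1); split.
  - move=> i; right; rewrite lexx andbT.
    have : (1 <= n%:R :> R) by rewrite ler1n (leq_trans _ n3).
    move=> n1; rewrite ler_pdivrMr; last by lra.
    lra.
  - rewrite sumr_const card_ord.
    have : (1 <= 1 *+ n :> R) by rewrite -[1 *+ n]/(n%:R) ler1n (leq_trans _ n3).
    lra.
  - move=> i; apply: (le_trans _ (@cnorm_ge0 _ _)).
    apply: mulr_le0_ge0; last by rewrite ler0z.
    rewrite powRr1; last by rewrite /Q divr_ge0 ?mahler_ge0 // ltW.
    lra.

have n0 : (0 < n)%N by apply: leq_trans n3.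
have [u [v huv]] := Bezoutz x y; rewrite g1 in huv.
set b0 : int := - v; set d0 : int := u.
set X' : int := u * x0 + v * y0; set Y' : int := x * y0 - y * x0.
have Y'0 : Y' != 0 by rewrite /Y' -opprB oppr_eq0 (mulrC y x0).
have ex0 : x0 = X' * x + Y' * b0 by rewrite /X' /Y' /b0; rewrite -[LHS]mulr1 -huv; ring.
have ey0 : y0 = X' * y + Y' * d0 by rewrite /X' /Y' /d0; rewrite -[LHS]mulr1 -huv; ring.
have det k0 : x * (d0 + k0 * y) - (b0 + k0 * x) * y = 1.
  by rewrite /b0 /d0 -huv; ring.
have eY : `|x0 * y - x * y0| = `|Y'| by rewrite /Y' -normrN opprB (mulrC y x0).
clearbody b0 d0 X' Y'.
pose tR : R := X'%:~R / Y'%:~R.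
pose k := Num.floor (tR + 1 / 2).
have hk : `|tR - k%:~R| <= 1 / 2.
  have := floor_itv (tR + 1 / 2); rewrite -/k rmorphD /= => /andP [h1 h2].
  rewrite ler_norml; apply/andP; split; lra.
have [szq feq qn mq] := @qform_props R n p alpha x (b0 + k * x) y (d0 + k * y) E Fxy0.
set q := qform n p x (b0 + k * x) y (d0 + k * y) in szq feq qn mq.
have Mle : mahler R p <= mahler R q.
  apply: redp.
    split => //; exists x, (b0 + k * x), y, (d0 + k * y), 1; split; [|split].
    - by left; rewrite det.
    - by left.
    - by move=> X Y; rewrite feq mul1r.
  by rewrite /normalized qn a_F F_b.
pose L i := Lform alpha i x y.
have Fac : (feval n p x y)%:~R = (p`_n)%:~R * \prod_i L i :> R[i].
  by rewrite feval_intr (feval_prod E).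
have L0 i : L i != 0.
  have : (feval n p x y)%:~R != 0 :> R[i] by rewrite intr_eq0.
  by rewrite Fac mulf_eq0 negb_or => /andP [_ /prodf_neq0]; apply.
pose beta i := - Lform alpha i b0 d0 / L i.
pose m i := Num.max 1 (cnorm (- Lform alpha i (b0 + k * x) (d0 + k * y) / Lform alpha i x y)).
have m1 i : 1 <= m i by rewrite le_max lexx.
have Pge0 : 0 <= \prod_i m i by apply: prodr_ge0 => i _; apply: le_trans (m1 i).
have QP : Q <= \prod_i m i.
  rewrite /Q ler_pdivrMr // (le_trans Mle) // mq mulrC ler_wpM2l //.
  by apply: le_trans F_b bh.
have [psi [hpsi1 hpsi2 hpsi3]] := @psi_exists R n Q m n0 Q1 m1 QP.
exists psi; split => // i.
pose tC : R[i] := X'%:~R / Y'%:~R.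
have ratio : Lform alpha i x0 y0 / Lform alpha i x y = Y'%:~R * (tC - beta i).
  have Yn : (Y'%:~R : R[i]) != 0 by rewrite intr_eq0.
  have := L0 i; rewrite /L /Lform {1}ex0 {1}ey0 !rmorphD !rmorphM /= => Ln.
  exact: ratio_alg.
have betak : - Lform alpha i (b0 + k * x) (d0 + k * y) / Lform alpha i x y = beta i - k%:~R.
  have := L0 i; rewrite /L /Lform !rmorphD !rmorphM /= => Ln.
  exact: betak_alg.
have tCk : tC - k%:~R = (tR - k%:~R)%:C%C.
  by rewrite rmorphB /= real_complex_int /tR fmorph_div /= !real_complex_int.
have key : m i - 3 / 2 <= cnorm (tC - beta i).
  have c1 : cnorm (beta i - k%:~R) <= cnorm (tC - beta i) + 1 / 2.
    have -> : beta i - k%:~R = - (tC - beta i) + (tC - k%:~R) by ring.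
    apply: le_trans (cnormD _ _ _) _; rewrite cnormN tCk cnormR lerD2l //.
  have c2 : m i - 1 <= cnorm (beta i - k%:~R).
    rewrite /m betak; have := @cnorm_ge0 R (beta i - k%:~R).
    move=> c0; rewrite lerBlDl ge_max; apply/andP; split; lra.
  lra.
have eD : (`|x0 * y - x * y0|)%:~R = cnorm (Y'%:~R : R[i]).
  by rewrite cnorm_int eY.
rewrite ratio cnormM -eD mulrC ler_wpM2l ?ler0z //.
have := hpsi3 i; lra.
Qed.
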